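(* Let $G$ be a connected cubic circulant graph with edge ideal $I(G)\subseteq\Bbbk[x_1,\ldots,x_{2n}]$, let $t\ge1$, and let $\mathbf a\in\mathbb N^{2n}$ be an exponent such that $x^{\mathbf a}\notin I(G)^{(t)}$. Then $$\sqrt{I(G)^t:x^{\mathbf a}}=\sqrt{I(G)^{(t)}:x^{\mathbf a}}.$$
   Context: A cubic circulant graph is $C_{2n}(a,n)$ for integers $1\le a<n$: the simple graph on $[2n]$ in which distinct $i,j$ are adjacent iff $|i-j|\in\{a,n,2n-a\}$. $I(G)=(x_ix_j\mid\{i,j\}\in E(G))$, and $x^{\mathbf a}=x_1^{a_1}\cdots x_{2n}^{a_{2n}}$. For a squarefree monomial ideal $I=P_1\cap\cdots\cap P_r$ (minimal primary decomposition), $I^{(t)}=P_1^t\cap\cdots\cap P_r^t$. *)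

(* Defs.v *)
From mathcomp Require Import all_boot all_order all_algebra.
From mathcomp Require Import mpoly.
Set Implicit Arguments. Unset Strict Implicit. Unset Printing Implicit Defensive.
Import GRing.Theory.
Local Open Scope ring_scope.

(* Vertices of C_{2n}(a,n): the ordinals 'I_(2n) (vertex i <-> paper's i+1). *)
Definition natdist (i j : nat) : nat := if (i <= j)%N then (j - i)%N else (i - j)%N.

Definition circ_adj (n a : nat) : rel 'I_(2 * n) :=
  fun i j => (i != j) &&
    [|| natdist i j == a, natdist i j == n | natdist i j == (2 * n - a)%N].

Arguments circ_adj : clear implicits.

Definition graph_connected (T : finType) (e : rel T) : Prop :=
  forall x y : T, connect e x y.

Section Ideals.
Variable R : comNzRingType.

Definition gen_ideal (S : R -> Prop) : R -> Prop :=
  fun f => exists r : seq (R * R),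
    (forall p, p \in r -> S p.2) /\ f = \sum_(p <- r) p.1 * p.2.

Definition ideal_pow (I : R -> Prop) (t : nat) : R -> Prop :=
  gen_ideal (fun f => exists s : seq R,
    size s = t /\ (forall g, g \in s -> I g) /\ f = \prod_(g <- s) g).

Definition ideal_colon (I : R -> Prop) (g : R) : R -> Prop := fun f => I (f * g).

Definition ideal_rad (I : R -> Prop) : R -> Prop := fun f => exists m : nat, I (f ^+ m).

Definition is_ideal (P : R -> Prop) : Prop :=
  P 0 /\ (forall f g, P f -> P g -> P (f + g)) /\ (forall c f, P f -> P (c * f)).

Definition is_prime_ideal (P : R -> Prop) : Prop :=
  is_ideal P /\ ~ P 1 /\ (forall f g, P (f * g) -> P f \/ P g).

Definition minimal_prime (I P : R -> Prop) : Prop :=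
  is_prime_ideal P /\ (forall f, I f -> P f) /\
  (forall Q, is_prime_ideal Q -> (forall f, I f -> Q f) -> (forall f, Q f -> P f) ->
     forall f, P f -> Q f).

(* Symbolic power of a squarefree monomial (radical) ideal I = P_1 \cap ... \cap P_r,
   the P_i being its minimal primes:  I^(t) = P_1^t \cap ... \cap P_r^t. *)
Definition symb_pow (I : R -> Prop) (t : nat) : R -> Prop :=
  fun f => forall P, minimal_prime I P -> ideal_pow P t f.

End Ideals.

Definition edge_ideal_circ (k : fieldType) (n a : nat) : {mpoly k[2 * n]} -> Prop :=
  @gen_ideal {mpoly k[2 * n]} (fun f => exists i j : 'I_(2 * n), circ_adj n a i j /\ f = 'X_i * 'X_j).

Notation expvec N := ('X_{1.. N}) (only parsing).
Arguments edge_ideal_circ : clear implicits.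

(* Main.v *)
Require Import Defs.
From mathcomp Require Import all_boot all_order all_algebra.
From mathcomp Require Import mpoly.
From mathcomp Require Import zify ring.
From Stdlib Require Import ClassicalEpsilon Classical.
Set Implicit Arguments. Unset Strict Implicit. Unset Printing Implicit Defensive.

Section Usage.
Variable V : eqType.
Definition usage (v : V) (L : seq (V * V)) : nat :=
  count (fun p => p.1 == v) L + count (fun p => p.2 == v) L.
Lemma usage_cat v L1 L2 : usage v (L1 ++ L2) = usage v L1 + usage v L2.
Proof. rewrite /usage !count_cat; lia. Qed.
Lemma usage_cons v p L : usage v (p :: L) = (p.1 == v) + (p.2 == v) + usage v L.
Proof. rewrite /usage /=; lia. Qed.
Lemma usage_nil v : usage v [::] = 0. Proof. by []. Qed.
End Usage.

Section Wsum.
Variable V : finType.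
Definition wsum (w : V -> nat) (A : {set V}) := \sum_(v in A) w v.
Implicit Types (A B U : {set V}) (w : V -> nat).
Lemma wsumE w A : wsum w A = \sum_v ((v \in A) * w v).
Proof. rewrite /wsum big_mkcond /=; apply: eq_bigr => v _; by case: (v \in A); rewrite ?mul1n. Qed.
Lemma wsum_le w A B : (forall v, (v \in A) * w v <= (v \in B) * w v) -> wsum w A <= wsum w B.
Proof. move=> H; rewrite !wsumE; exact: leq_sum. Qed.
Lemma wsum_sub w A B : A \subset B -> wsum w A <= wsum w B.
Proof. move=> /subsetP H; apply: wsum_le => v; case: (boolP (v \in A)) => [/H -> //|]; by rewrite mul0n. Qed.
Lemma wsumU w A B : wsum w (A :|: B) <= wsum w A + wsum w B.
Proof. rewrite !wsumE -big_split /=; apply: leq_sum => v _; rewrite in_setU; by case: (v \in A); case: (v \in B); rewrite /=; lia. Qed.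
Lemma wsum_split w A U : wsum w A = wsum w (A :&: U) + wsum w (A :\: U).
Proof. rewrite !wsumE -big_split /=; apply: eq_bigr => v _; rewrite in_setI in_setD; by case: (v \in A); case: (v \in U); rewrite /=; lia. Qed.
Lemma wsum_pos w A v : v \in A -> 0 < w v -> 0 < wsum w A.
Proof. move=> vA wv; rewrite /wsum (bigD1 v) //=; lia. Qed.
Lemma wsum_ext w1 w2 A : (forall v, v \in A -> w1 v = w2 v) -> wsum w1 A = wsum w2 A.
Proof. by move=> H; apply: eq_bigr. Qed.
End Wsum.

Section Konig.
Variable V : finType.
Variable side : V -> bool.
Implicit Types (E : rel V) (C D U : {set V}) (w : V -> nat).

Definition coverb (E : rel V) (C : {set V}) := [forall x, forall y, E x y ==> (x \in C) || (y \in C)].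
Lemma coverP E C : reflect (forall x y, E x y -> (x \in C) || (y \in C)) (coverb E C).
Proof.
apply: (iffP forallP) => H.
  by move=> x y Exy; have /forallP/(_ y) := H x; rewrite Exy.
by move=> x; apply/forallP => y; apply/implyP; apply: H.
Qed.

Definition restr (U : {set V}) (E : rel V) : rel V := fun x y => [&& E x y, x \in U & y \in U].
Definition wrestr (U : {set V}) (w : V -> nat) v := if v \in U then w v else 0.

Definition konig_concl (E : rel V) (w : V -> nat) :=
  exists L : seq (V * V), exists C : {set V},
    [/\ all (fun p => E p.1 p.2) L, (forall v, usage v L <= w v),
        (forall x y, E x y -> (x \in C) || (y \in C)) & wsum w C <= size L].

Lemma half E w (C U : {set V}) (L1 : seq (V * V)) D1 :
  (forall D, coverb E D -> wsum w C <= wsum w D) ->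
  (forall x y, E x y -> x \notin C :\: U -> y \notin C :\: U -> (x \in U) && (y \in U)) ->
  (forall x y, restr U E x y -> (x \in D1) || (y \in D1)) ->
  wsum (wrestr U w) D1 <= size L1 ->
  wsum w (C :&: U) <= size L1.
Proof.
move=> minC PU covD1 szL1.
set K := (D1 :&: U) :|: (C :\: U).
have covK : coverb E K.
  apply/coverP => x y Exy; rewrite /K !in_setU !in_setI.
  move: (PU x y Exy) (covD1 x y); rewrite /restr Exy /= !in_setD.
  by case: (x \in C); case: (y \in C); case: (x \in U); case: (y \in U);
     case: (x \in D1); case: (y \in D1) => //= H1 H2; move: (H1 isT isT) => //; move: (H2 isT).
have h1 := minC K covK; rewrite /K in h1.
have h2 := wsumU w (D1 :&: U) (C :\: U).
have h3 : wsum w (D1 :&: U) <= wsum (wrestr U w) D1.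
  apply: leq_trans (wsum_sub _ (subsetIl D1 U)).
  by rewrite leq_eqVlt; apply/orP; left; apply/eqP; apply: wsum_ext => v; rewrite in_setI /wrestr => /andP[_ ->].
have h4 := wsum_split w C U.
lia.
Qed.

Lemma wsumT w : \sum_v w v = wsum w setT.
Proof. by rewrite /wsum; apply: eq_bigl => v; rewrite in_setT. Qed.
Lemma sum_wrestr U w : \sum_v wrestr U w v = wsum w U.
Proof. by rewrite /wsum [RHS]big_mkcond. Qed.
Lemma wsum_compl w U : \sum_v w v = wsum w U + wsum w (~: U).
Proof. by rewrite wsumT (wsum_split w setT U) setTI setTD. Qed.
Lemma sum_ind D (x : V) : \sum_v ((v \in D) * (v == x)) = (x \in D).
Proof.
rewrite (bigD1 x) //= eqxx muln1 big1 ?addn0 // => v /negbTE ->; by rewrite muln0.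
Qed.

Lemma konig E w : (forall x y, E x y -> side x != side y) -> konig_concl E w.
Proof.
move: {2}(\sum_v w v) (leqnn (\sum_v w v)) => s.
elim: s E w => [|s IH] E w.
  move=> w0 _; exists [::], setT; split => //.
  - by move=> x y _; rewrite in_setT.
  - rewrite -wsumT /=; lia.
move=> Hs Hb.
case: (@arg_minnP _ setT (coverb E) (wsum w)); first by apply/coverP => x y _; rewrite in_setT.
move=> C0 covC0 minC0.
case: (boolP [exists C : {set V}, [&& coverb E C, wsum w C == wsum w C0,
     0 < wsum w [set v | side v == (v \in C)] & 0 < wsum w (~: [set v | side v == (v \in C)])]]).
  case/existsP => C /and4P [covC /eqP eqC pos1 pos2].
  set U := [set v | side v == (v \in C)] in pos1 pos2.
  have minC : forall D, coverb E D -> wsum w C <= wsum w D by move=> D /minC0; rewrite eqC.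
  have Hsum := wsum_compl w U.
  have [L1 [D1 [allL1 useL1 covD1 szD1]]] : konig_concl (restr U E) (wrestr U w).
    apply: IH; first by rewrite sum_wrestr; lia.
    by move=> x y /and3P [Exy _ _]; apply: Hb.
  have [L2 [D2 [allL2 useL2 covD2 szD2]]] : konig_concl (restr (~: U) E) (wrestr (~: U) w).
    apply: IH; first by rewrite sum_wrestr; lia.
    by move=> x y /and3P [Exy _ _]; apply: Hb.
  exists (L1 ++ L2), C; split.
  - rewrite all_cat; apply/andP; split.
      by apply: sub_all allL1 => p /and3P [].
    by apply: sub_all allL2 => p /and3P [].
  - move=> v; rewrite usage_cat; have := useL1 v; have := useL2 v.
    rewrite /wrestr in_setC; case: (v \in U) => /=; lia.
  - by apply/coverP.
  - have h1 : wsum w (C :&: U) <= size L1.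
      apply: (half minC _ covD1 szD1) => x y Exy.
      move: (Hb x y Exy) (coverP _ _ covC x y Exy).
      rewrite /U !in_setD !in_set.
      by case: (side x); case: (side y); case: (x \in C); case: (y \in C).
    have h2 : wsum w (C :&: ~: U) <= size L2.
      apply: (half minC _ covD2 szD2) => x y Exy.
      move: (Hb x y Exy) (coverP _ _ covC x y Exy).
      rewrite /U !in_setD !in_setC !in_set.
      by case: (side x); case: (side y); case: (x \in C); case: (y \in C).
    have := wsum_split w C U; rewrite setDE size_cat; lia.
move=> nA.
case: (boolP [exists x, exists y, [&& E x y, 0 < w x & 0 < w y]]).
  case/existsP => x /existsP [y /and3P [Exy wx wy]].
  have xy : x != y by apply: contraNneq (Hb x y Exy) => ->.
  pose w' := fun v => w v - (v == x) - (v == y).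
  have hw : forall v, w v = w' v + (v == x) + (v == y).
    move=> v; rewrite /w'; have [->|vx] := eqVneq v x.
      rewrite (negbTE xy) /=; lia.
    have [->|vy] := eqVneq v y; first by rewrite /=; lia.
    rewrite /=; lia.
  have hsum : forall D, wsum w D = wsum w' D + (x \in D) + (y \in D).
    move=> D; rewrite !wsumE -!sum_ind -!big_split /=; apply: eq_bigr => v _.
    rewrite hw; case: (v \in D) => /=; lia.
  have [L' [D [allL' useL' covD szD]]] : konig_concl E w'.
    apply: IH => //; have := hsum setT; rewrite -!wsumT !in_setT /=; lia.
  have useL : forall v, usage v ((x, y) :: L') <= w v.
    move=> v; rewrite usage_cons /= (hw v) [x == v]eq_sym [y == v]eq_sym; have := useL' v; lia.
  have allL : all (fun p => E p.1 p.2) ((x, y) :: L') by rewrite /= Exy.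
  case: (boolP ((x \in D) && (y \in D))) => [/andP [xD yD]|nxy].
    case: (boolP (wsum w D == wsum w C0)) => [/eqP eqD | neD].
      exfalso; move/negP: nA; apply; apply/existsP; exists D.
      rewrite (introT (coverP _ _) covD) eqD eqxx /=.
      move: (Hb x y Exy); case sx: (side x); case sy: (side y) => // _.
      + apply/andP; split; first by apply: (wsum_pos (v := x)) => //; rewrite in_set sx xD.
        by apply: (wsum_pos (v := y)) => //; rewrite in_setC in_set sy yD.
      + apply/andP; split; first by apply: (wsum_pos (v := y)) => //; rewrite in_set sy yD.
        by apply: (wsum_pos (v := x)) => //; rewrite in_setC in_set sx xD.
    exists ((x, y) :: L'), C0; split => //; first by apply/coverP.
    have := minC0 D (introT (coverP _ _) covD); have := hsum D; rewrite xD yD /=.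
    move: neD; rewrite neq_ltn => /orP [] h; lia.
  exists ((x, y) :: L'), D; split => //.
  have := hsum D; move: nxy; rewrite /=; case: (x \in D); case: (y \in D) => //=; lia.
move=> nB.
exists [::], [set v | w v == 0]; split => //.
- move=> x y Exy; rewrite !in_set; apply: contraNT nB => h; apply/existsP; exists x; apply/existsP; exists y.
  by rewrite Exy; move: h; rewrite negb_or -!lt0n => ->.
- by rewrite /wsum big1 // => v; rewrite in_set => /eqP.
Qed.
End Konig.

Lemma usage_nseq (V : eqType) (u : V) k p : usage u (nseq k p) = ((p.1 == u) + (p.2 == u)) * k.
Proof. rewrite /usage !count_nseq; lia. Qed.

Lemma usage_take (V : eqType) (u : V) t L : usage u (take t L) <= usage u L.
Proof. rewrite -{2}(cat_take_drop t L) usage_cat; lia. Qed.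

Lemma usage_size (V : eqType) (u : V) L : all (fun p => p.1 != p.2) L -> usage u L <= size L.
Proof.
elim: L => [|p L IH] //= /andP [hp hL]; rewrite usage_cons.
have := IH hL; case: (eqVneq p.1 u) => [e1|n1]; case: (eqVneq p.2 u) => [e2|n2] /=; try lia.
by move: hp; rewrite e1 e2 eqxx.
Qed.

Lemma usage0 (V : eqType) (u : V) L : all (fun p => (p.1 != u) && (p.2 != u)) L -> usage u L = 0.
Proof.
elim: L => [|p L IH] //= /andP [/andP [h1 h2] hL]; rewrite usage_cons IH //.
by rewrite (negbTE h1) (negbTE h2).
Qed.

Section Comb.
Variable V : finType.
Variable adj : rel V.
Hypothesis adj_sym : forall x y, adj x y -> adj y x.
Hypothesis adj_irr : forall x, ~~ adj x x.

Lemma comb (m : V -> nat) (t : nat) (F : {set V}) :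
  (forall v, v \in F -> exists side : V -> bool, forall x y, adj x y ->
      x != v -> ~~ adj v x -> y != v -> ~~ adj v y -> side x != side y) ->
  F != set0 ->
  (forall C : {set V}, (forall x y, adj x y -> (x \in C) || (y \in C)) ->
       wsum m C < t -> [exists x in F, x \in C]) ->
  exists L : seq (V * V), [/\ size L = t, all (fun p => adj p.1 p.2) L &
       forall u, usage u L <= m u + (u \in F) * t].
Proof.
move=> Hside /set0Pn [v vF] Hcov.
have adj_neq : forall x y, adj x y -> x != y.
  by move=> x y Axy; apply: contraNneq (adj_irr x) => e; rewrite {2}e.
case: (boolP [exists x in F, exists y in F, adj x y]).
  case/exists_inP => x xF /exists_inP [y yF Axy].
  exists (nseq t (x, y)); split; first by rewrite size_nseq.
    by rewrite all_nseq /= Axy orbT.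
  move=> u; rewrite usage_nseq /=.
  have := adj_neq _ _ Axy.
  case: (eqVneq x u) => [<-|xu]; first by rewrite xF; case: (eqVneq y x) => //= _ _; lia.
  case: (eqVneq y u) => [<-|yu]; first by rewrite yF /=; lia.
  by rewrite /=; lia.
move=> nindep.
have indep : forall x y, x \in F -> y \in F -> ~~ adj x y.
  move=> x y xF yF; apply: contra nindep => Axy; apply/exists_inP; exists x => //.
  by apply/exists_inP; exists y.
have [side Hs] := Hside v vF.
pose NF := [set y | (y \notin F) && [exists x in F, adj x y]].
pose W := F :|: NF.
pose EH : rel V := fun x y => [&& adj x y, x \notin W & y \notin W].
have HW : forall x, x \notin W -> (x != v) && ~~ adj v x.
  move=> x; rewrite !in_setU !in_set negb_or => /andP [xnF h].
  have nex : ~~ [exists y in F, adj y x] by move: h; rewrite xnF.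
  apply/andP; split; first by apply: contraNneq xnF => ->.
  by apply: contra nex => Avx; apply/exists_inP; exists v.
have [LH [CH [allH useH covH szH]]] : konig_concl EH m.
  apply: (@konig _ side) => x y /and3P [Axy /HW /andP [xv nvx] /HW /andP [yv nvy]].
  exact: Hs.
pose nb y := odflt v [pick x in F | adj x y].
have nbP : forall y, y \in NF -> (nb y \in F) && adj y (nb y).
  move=> y; rewrite in_set => /andP [_ /exists_inP [x xF Axy]].
  rewrite /nb; case: pickP => [z /andP [zF Azy] | /(_ x)]; last by rewrite xF Axy.
  by rewrite /= zF adj_sym.
pose Lg := fun s => flatten [seq nseq (m y) (y, nb y) | y <- s].
have szLg : forall s, size (Lg s) = \sum_(y <- s) m y.
  by elim => [|y s IH]; rewrite /Lg ?big_nil ?big_cons //= size_cat size_nseq -IH.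
have useLg : forall u s, usage u (Lg s) = \sum_(y <- s) ((y == u) + (nb y == u)) * m y.
  by move=> u; elim => [|y s IH]; rewrite /Lg ?big_nil ?big_cons //= usage_cat usage_nseq -IH.
have allLg : forall s, all (fun y => y \in NF) s -> all (fun p => adj p.1 p.2) (Lg s).
  elim => [|y s IH] //= /andP [yNF hs]; rewrite all_cat IH // andbT.
  by rewrite all_nseq /=; case/andP: (nbP y yNF) => _ ->; rewrite orbT.
pose L1 := Lg (enum NF).
pose L := take t (L1 ++ LH).
pose C := NF :|: (CH :\: F).
have covC : forall x y, adj x y -> (x \in C) || (y \in C).
  move=> x y Axy; rewrite !in_setU !in_setD.
  case: (boolP (x \in F)) => xF.
    have yNF : y \in NF.
      rewrite in_set; apply/andP; split; first by apply/negP => yF; move: (indep x y xF yF); rewrite Axy.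
      by apply/exists_inP; exists x.
    by rewrite yNF orbT.
  case: (boolP (y \in F)) => yF.
    have xNF : x \in NF.
      rewrite in_set xF /=; by apply/exists_inP; exists y => //; apply: adj_sym.
    by rewrite xNF.
  case: (boolP (x \in NF)) => xNF //.
  case: (boolP (y \in NF)) => yNF; first by rewrite !orbT.
  have : EH x y by rewrite /EH Axy /W !in_setU (negbTE xF) (negbTE yF) (negbTE xNF) (negbTE yNF).
  by move/covH => /orP [] ->; rewrite ?orbT.
have CF : wsum m C >= t.
  rewrite leqNgt; apply/negP => /(Hcov C covC) /exists_inP [x xF].
  by rewrite !in_setU !in_setD xF /= orbF in_set xF.
have hC : wsum m C <= wsum m NF + wsum m CH.
  apply: leq_trans (wsumU m NF (CH :\: F)) _; rewrite leq_add2l; apply: wsum_sub; exact: subsetDl.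
have szL1 : size L1 = wsum m NF by rewrite /L1 szLg big_enum.
have allL1 : all (fun p => adj p.1 p.2) L1.
  by apply: allLg; apply/allP => y; rewrite mem_enum.
have allHadj : all (fun p => adj p.1 p.2) LH by apply: sub_all allH => p /and3P [].
have allL : all (fun p => adj p.1 p.2) L.
  have : all (fun p => adj p.1 p.2) (L1 ++ LH) by rewrite all_cat allL1 allHadj.
  by rewrite -(cat_take_drop t (L1 ++ LH)) all_cat => /andP [].
exists L; split => //.
  rewrite /L size_takel // size_cat szL1; lia.
move=> u; case: (boolP (u \in F)) => uF.
  have : usage u L <= size L.
    by apply: usage_size; apply: sub_all allL => p /adj_neq.
  rewrite /L size_take; case: ifP => h /=; move: h; lia.
apply: leq_trans (usage_take u t (L1 ++ LH)) _; rewrite usage_cat mul0n addn0.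
have hL1 : usage u L1 = (u \in NF) * m u.
  rewrite /L1 useLg big_enum /=.
  rewrite (eq_bigr (fun y => (y == u) * m y)); last first.
    move=> y /nbP /andP [nbF _]; have -> : (nb y == u) = false by apply: contraNF uF => /eqP <-.
    by rewrite addn0.
  case: (boolP (u \in NF)) => uNF.
    rewrite (bigD1 u) //= eqxx mul1n big1 ?addn0 // => y /andP [_ /negbTE ->]; by rewrite mul0n.
  by rewrite big1 // => y yNF; have -> : (y == u) = false by apply: contraNF uNF => /eqP <-.
case: (boolP (u \in NF)) => uNF.
  have -> : usage u LH = 0.
    apply: usage0; apply: sub_all allH => p /and3P [_ h1 h2].
    apply/andP; split; [apply: contraNneq h1 | apply: contraNneq h2] => ->; by rewrite in_setU uNF orbT.
  rewrite hL1 uNF; lia.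
rewrite hL1 (negbTE uNF) mul0n add0n; exact: useH.
Qed.
End Comb.

Import GRing.Theory Num.Theory.
Local Open Scope ring_scope.

Lemma core (n a : nat) (d k q : int) : (0 < n)%N -> coprime a n ->
  (a%:Z * d + n%:Z * k = (2 * n)%N%:Z * q)%R -> (- n%:Z < d)%R -> (d < n%:Z)%R ->
  d = 0 /\ k = (2 * q)%R.
Proof.
move=> n0 cop E dl du.
have E1 : (a%:Z * d = n%:Z * (2 * q - k))%R by lia.
have hd : (n %| `|d|)%N.
  have : (n %| a * `|d|)%N.
    have -> : (a * `|d|)%N = `|(a%:Z * d)%R|%N by rewrite abszM.
    by rewrite E1 abszM /= dvdn_mulr.
  by rewrite Gauss_dvdr // coprime_sym.
have d0 : d = 0.
  case: (posnP `|d|%N) => [/eqP|]; first by rewrite absz_eq0 => /eqP.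
  by move=> /(dvdn_leq) /(_ hd); lia.
split => //; subst d.
have : (n%:Z * k = n%:Z * (2 * q))%R by lia.
by apply: mulfI; lia.
Qed.

Section Circ.
Variables (n a : nat).
Hypotheses (a1 : (1 <= a)%N) (an : (a < n)%N) (cop : coprime a n).
Variable v : 'I_(2 * n).

Lemma n0 : (0 < 2 * n)%N. Proof. lia. Qed.

Definition repn (p e : nat) : nat := ((v + a * p + e * n) %% (2 * n))%N.
Lemma repn_lt p e : (repn p e < 2 * n)%N.
Proof. by rewrite /repn ltn_pmod // n0. Qed.
Definition rep (pe : 'I_n * bool) : 'I_(2 * n) := Ordinal (repn_lt pe.1 pe.2).

Lemma repnE p e : exists Q : nat, (v + a * p + e * n = Q * (2 * n) + repn p e)%N.
Proof. by exists ((v + a * p + e * n) %/ (2 * n))%N; rewrite /repn -divn_eq. Qed.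

Lemma rep_inj : injective rep.
Proof.
move=> [p e] [p' e'] /(congr1 val) /= E.
have [Q HQ] := repnE p e; have [Q' HQ'] := repnE p' e'.
have lp := ltn_ord p; have lp' := ltn_ord p'.
have [d0 k0] : p%:Z - p'%:Z = 0 /\ e%:Z - e'%:Z = 2 * (Q%:Z - Q'%:Z).
  apply: (@core n a) => //; first exact: (ltn_trans a1 an).
  - have E' : repn p e = repn p' e' := E. lia.
  - lia.
  - lia.
have pp : p = p' by apply: ord_inj; lia.
have ee : e = e' by move: k0; clear; case: e; case: e' => //=; lia.
by rewrite pp ee.
Qed.

Lemma rep_onto x : exists pe, x = rep pe.
Proof.
have : x \in codom rep.
  apply: inj_card_onto; first exact: rep_inj.
  by rewrite card_prod !card_ord card_bool; lia.
by case/codomP => pe ->; exists pe.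
Qed.

Definition side (x : 'I_(2 * n)) : bool :=
  [exists pe : 'I_n * bool, (rep pe == x) && odd (pe.1 + pe.2)].

Lemma sideE pe : side (rep pe) = odd (pe.1 + pe.2).
Proof.
apply/existsP/idP => [[pe' /andP [/eqP /rep_inj -> //]] | h].
by exists pe; rewrite eqxx h.
Qed.

Lemma rep_p0 (pe : 'I_n * bool) : pe.1 = 0 :> nat -> (rep pe == v) || circ_adj n a v (rep pe).
Proof.
case: pe => p e /= p0.
set r := rep (p, e).
have hr : nat_of_ord r = ((v + e * n) %% (2 * n))%N by rewrite /r /= /repn p0 muln0 addn0.
have lv := ltn_ord v.
clearbody r; case: e hr => /= hr; last first.
  apply/orP; left; apply/eqP; apply: ord_inj; rewrite hr mul0n addn0 modn_small //.
move: hr; rewrite mul1n => hr.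
apply/orP; right; rewrite /circ_adj /natdist hr.
case: (ltnP v n) => hv.
  rewrite modn_small; last by lia.
  have -> : (v <= v + n)%N by lia.
  have -> : (v + n - v = n)%N by lia.
  rewrite eqxx orbT andbT; apply/eqP => /(congr1 (@nat_of_ord _)); rewrite hr modn_small; lia.
have e2 : (v + n = (v - n) + 2 * n)%N by lia.
rewrite e2 modnDr modn_small; last by lia.
have -> : (v <= v - n)%N = false by lia.
have -> : (v - (v - n) = n)%N by lia.
rewrite eqxx orbT andbT; apply/eqP => /(congr1 (@nat_of_ord _)); rewrite hr e2 modnDr modn_small; lia.
Qed.

Ltac go d k q := have [? ?] : d = 0 /\ k = (2 * q)%R by
  apply: (@core n a) => //; [exact: ltn_trans a1 an | lia | lia | lia].

Lemma side_ok x y : circ_adj n a x y -> x != v -> ~~ circ_adj n a v x ->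
  y != v -> ~~ circ_adj n a v y -> side x != side y.
Proof.
have [[p e] ->] := rep_onto x; have [[p' e'] ->] := rep_onto y.
move=> Axy xv nvx yv nvy; rewrite !sideE /=.
have p0 : (0 < p)%N.
  rewrite lt0n; apply/negP => /eqP h.
  by move: (@rep_p0 (p, e) h); rewrite (negbTE xv) (negbTE nvx).
have p0' : (0 < p')%N.
  rewrite lt0n; apply/negP => /eqP h.
  by move: (@rep_p0 (p', e') h); rewrite (negbTE yv) (negbTE nvy).
have [Q HQ] := repnE p e; have [Q' HQ'] := repnE p' e'.
have lp := ltn_ord p; have lp' := ltn_ord p'.
move: Axy; rewrite /circ_adj /natdist /= => /andP [_].
set X := repn p e; set Y := repn p' e'.
have hX : (X < 2 * n)%N := repn_lt p e. have hY : (Y < 2 * n)%N := repn_lt p' e'.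
case: leqP => hxy; case/or3P => /eqP Hd.
- go (p'%:Z - p%:Z - 1) (e'%:Z - e%:Z) (Q'%:Z - Q%:Z). lia.
- go (p'%:Z - p%:Z) (e'%:Z - e%:Z - 1) (Q'%:Z - Q%:Z). lia.
- go (p'%:Z - p%:Z + 1) (e'%:Z - e%:Z) (Q'%:Z - Q%:Z + 1). lia.
- go (p'%:Z - p%:Z + 1) (e'%:Z - e%:Z) (Q'%:Z - Q%:Z). lia.
- go (p'%:Z - p%:Z) (e'%:Z - e%:Z + 1) (Q'%:Z - Q%:Z). lia.
- go (p'%:Z - p%:Z - 1) (e'%:Z - e%:Z) (Q'%:Z - Q%:Z - 1). lia.
Qed.

End Circ.

Lemma natdistC x y : natdist x y = natdist y x.
Proof. rewrite /natdist; case: (leqP x y) => h1; case: (leqP y x) => h2; lia. Qed.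

Lemma circ_sym n a (x y : 'I_(2 * n)) : circ_adj n a x y -> circ_adj n a y x.
Proof. by rewrite /circ_adj natdistC eq_sym. Qed.

Lemma circ_irr n a (x : 'I_(2 * n)) : ~~ circ_adj n a x x.
Proof. by rewrite /circ_adj eqxx. Qed.

Lemma conn_coprime n a : (1 <= a)%N -> (a < n)%N -> graph_connected (circ_adj n a) -> coprime a n.
Proof.
move=> a1 an conn.
set g := gcdn a n.
have ga : (g %| a)%N := dvdn_gcdl a n.
have gn : (g %| n)%N := dvdn_gcdr a n.
have gd : forall d, (d == a) || (d == n) || (d == 2 * n - a)%N -> (g %| d)%N.
  move=> d /orP [/orP [] /eqP -> // | /eqP ->]; rewrite dvdn_sub //; exact: dvdn_mull.
have cl : closed (circ_adj n a) [pred z : 'I_(2 * n) | (z %% g == 0)%N].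
  move=> x y /andP [_ H]; rewrite !inE.
  have : (g %| natdist x y)%N by apply: gd; case/or3P: H => ->; rewrite ?orbT.
  rewrite /natdist; case: leqP => hxy /dvdnP [c hc].
    have -> : (nat_of_ord y = x + c * g)%N by lia.
    by rewrite addnC modnMDl.
  have -> : (nat_of_ord x = y + c * g)%N by lia.
  by rewrite addnC modnMDl.
have l0 : (0 < 2 * n)%N by lia.
have l1 : (1 < 2 * n)%N by lia.
have := closed_connect cl (conn (Ordinal l0) (Ordinal l1)).
rewrite !inE /= mod0n eqxx => /esym /eqP h.
by rewrite /coprime -dvdn1 /dvdn h.
Qed.

Lemma circ_comb n a (m : 'I_(2 * n) -> nat) (t : nat) (F : {set 'I_(2 * n)}) :
  (1 <= a)%N -> (a < n)%N -> graph_connected (circ_adj n a) -> F != set0 ->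
  (forall C : {set 'I_(2 * n)}, (forall x y, circ_adj n a x y -> (x \in C) || (y \in C)) ->
       (wsum m C < t)%N -> [exists x in F, x \in C]) ->
  exists L : seq ('I_(2 * n) * 'I_(2 * n)), [/\ size L = t, all (fun p => circ_adj n a p.1 p.2) L &
       forall u, (usage u L <= m u + (u \in F) * t)%N].
Proof.
move=> a1 an conn Fn Hc.
have cop := conn_coprime a1 an conn.
apply: comb => //.
- exact: circ_sym.
- exact: circ_irr.
- move=> v _; exists (side a1 an cop v) => x y Axy xv nvx yv nvy.
  exact: side_ok.
Qed.

Import GRing.Theory.
Local Open Scope ring_scope.

Section Gen.
Variable R : comNzRingType.
Implicit Types (S T : R -> Prop) (f g : R).

Lemma gen0 S : gen_ideal S 0.
Proof. by exists [::]; rewrite big_nil. Qed.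
Lemma genD S f g : gen_ideal S f -> gen_ideal S g -> gen_ideal S (f + g).
Proof.
move=> [r1 [h1 ->]] [r2 [h2 ->]]; exists (r1 ++ r2); rewrite big_cat; split => //.
by move=> p; rewrite mem_cat => /orP [/h1|/h2].
Qed.
Lemma genM S c f : gen_ideal S f -> gen_ideal S (c * f).
Proof.
move=> [r [h ->]]; exists [seq (c * p.1, p.2) | p <- r]; split.
  by move=> p /mapP [q qr ->] /=; exact: h qr.
by rewrite big_map mulr_sumr; apply: eq_bigr => p _; rewrite mulrA.
Qed.
Lemma genG S f : S f -> gen_ideal S f.
Proof. by move=> Sf; exists [:: (1, f)]; rewrite big_seq1 mul1r; split => // p; rewrite inE => /eqP ->. Qed.
Lemma gen_sum S (I : Type) (s : seq I) (F : I -> R) : (forall i, gen_ideal S (F i)) -> gen_ideal S (\sum_(i <- s) F i).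
Proof. move=> h; elim: s => [|i s IH]; rewrite ?big_nil ?big_cons; [exact: gen0 | exact: genD]. Qed.
Lemma genMn S f k : gen_ideal S f -> gen_ideal S (f *+ k).
Proof. by move=> h; rewrite -mulr_natl; apply: genM. Qed.
Lemma gen_mono S T f : (forall g, S g -> T g) -> gen_ideal S f -> gen_ideal T f.
Proof. by move=> hST [r [h ->]]; exists r; split => // p /h /hST. Qed.

Lemma gen_in S (Q : R -> Prop) f : is_ideal Q -> (forall g, S g -> Q g) -> gen_ideal S f -> Q f.
Proof.
move=> [Q0 [QD QM]] hSQ [r [h ->]]; elim: r h => [|p r IH] h; rewrite ?big_nil ?big_cons //.
apply: QD; first by apply: QM; apply: hSQ; apply: h; rewrite inE eqxx.
by apply: IH => q qr; apply: h; rewrite inE qr orbT.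
Qed.

Lemma ideal_pow_mono I P t f : (forall g, I g -> P g) -> ideal_pow I t f -> ideal_pow P t f.
Proof.
move=> hIP; apply: gen_mono => g [s [hs [hI ->]]]; exists s; split => //; split => // h /hI; exact: hIP.
Qed.

Definition RC S (X : R) f := ideal_rad (ideal_colon (gen_ideal S) X) f.

Lemma RC_D S X f g : RC S X f -> RC S X g -> RC S X (f + g).
Proof.
move=> [i hi] [j hj]; exists (i + j)%N; rewrite /ideal_colon exprDn mulr_suml.
apply: gen_sum => k /=; rewrite mulrnAl; apply: genMn.
case: (leqP j k) => hk.
  rewrite -(subnK hk).
  have -> : f ^+ (i + j - (k - j + j)) * g ^+ (k - j + j) * X = (f ^+ (i + j - (k - j + j)) * g ^+ (k - j)) * (g ^+ j * X)
    by rewrite exprD; ring.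
  apply: genM; exact: hj.
have hk' : (i <= i + j - k)%N by lia.
rewrite -(subnK hk').
have -> : f ^+ (i + j - k - i + i) * g ^+ k * X = (f ^+ (i + j - k - i) * g ^+ k) * (f ^+ i * X)
  by rewrite exprD; ring.
apply: genM; exact: hi.
Qed.

Lemma RC_M S X c f : RC S X f -> RC S X (c * f).
Proof. by move=> [i hi]; exists i; rewrite /ideal_colon exprMn -mulrA; apply: genM. Qed.

Lemma RC_sum S X (I : Type) (s : seq I) (F : I -> R) : (forall i, RC S X (F i)) -> RC S X (\sum_(i <- s) F i).
Proof.
move=> h; elim: s => [|i s IH]; rewrite ?big_nil ?big_cons; last exact: RC_D.
by exists 1%N; rewrite /ideal_colon expr1 mul0r; apply: gen0.
Qed.
End Gen.

Import GRing.Theory.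
Local Open Scope ring_scope.

Section M.
Variable (k : fieldType) (N : nat).
Local Notation R := {mpoly k[N]}.
Implicit Types (C D : {set 'I_N}).

Lemma mono_pow (P : R -> Prop) t (ms : seq 'X_{1..N}) (b : 'X_{1..N}) :
  size ms = t -> (forall u, u \in ms -> P 'X_[u]) -> (\sum_(u <- ms) u <= b)%MM ->
  ideal_pow P t 'X_[b].
Proof.
move=> sz hP hb.
rewrite -(submK hb) mpolyXD; apply: genM; apply: genG.
exists [seq 'X_[u] | u <- ms]; split; first by rewrite size_map.
split; first by move=> g /mapP [u uin ->]; apply: hP.
by rewrite big_map mpolyX_prod.
Qed.

Definition fC : {rmorphism k -> {poly R}} := (polyC \o (@mpolyC N k))%FUN.
Definition hC (C : {set 'I_N}) (i : 'I_N) : {poly R} :=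
  if i \in C then 'X * ('X_i)%:P else ('X_i)%:P.
Definition psi C (p : R) : {poly R} := mmap fC (hC C) p.
Definition phi C (p : R) : R := (psi C p).[0].
Definition Cdeg (C : {set 'I_N}) (u : 'X_{1..N}) : nat := (\sum_(i in C) u i)%N.

Lemma psiD C : {morph psi C : x y / x + y}. Proof. exact: rmorphD. Qed.
Lemma psiM C : {morph psi C : x y / x * y}. Proof. exact: rmorphM. Qed.
Lemma psi1 C : psi C 1 = 1. Proof. exact: rmorph1. Qed.
Lemma psi0 C : psi C 0 = 0. Proof. exact: rmorph0. Qed.
Lemma psiC C c : psi C c%:MP = (c%:MP)%:P. Proof. by rewrite /psi mmapC. Qed.

Lemma phiD C : {morph phi C : x y / x + y}. Proof. by move=> x y; rewrite /phi psiD hornerD. Qed.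
Lemma phiM C : {morph phi C : x y / x * y}. Proof. by move=> x y; rewrite /phi psiM hornerM. Qed.
Lemma phi1 C : phi C 1 = 1. Proof. by rewrite /phi psi1 hornerC. Qed.
Lemma phi0 C : phi C 0 = 0. Proof. by rewrite /phi psi0 horner0. Qed.
Lemma phiZ C c p : phi C (c *: p) = c *: phi C p.
Proof. by rewrite -!mul_mpolyC phiM /phi psiC hornerC. Qed.


Lemma psiX C u : psi C 'X_[u] = 'X ^+ (Cdeg C u) * ('X_[u])%:P.
Proof.
rewrite /psi mmapX /mmap1.
rewrite (eq_bigr (fun i => 'X ^+ ((i \in C) * u i)%N * (('X_i)%:P) ^+ u i)); last first.
  move=> i _; rewrite /hC exprM -exprMn; by case: (i \in C); rewrite ?expr1 ?expr0 ?mul1r.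
rewrite big_split /= prodrXr mpolyXE_id rmorph_prod /=; congr (_ ^+ _ * _).
  by rewrite /Cdeg [RHS]big_mkcond; apply: eq_bigr => i _; case: (i \in C); rewrite ?mul1n ?mul0n.
by apply: eq_bigr => i _; rewrite rmorphXn.
Qed.

Lemma phiX C u : phi C 'X_[u] = if Cdeg C u == 0%N then 'X_[u] else 0.
Proof.
rewrite /phi psiX hornerM hornerXn hornerC expr0n; case: (Cdeg C u == 0%N); by rewrite ?mul1r ?mul0r.
Qed.

Lemma phi_coef C p u : (phi C p)@_u = if Cdeg C u == 0%N then p@_u else 0.
Proof.
elim/mpolyind: p => [|c m p _ _ IH]; first by rewrite phi0 mcoeff0; case: ifP.
rewrite phiD phiZ phiX !mcoeffD !mcoeffZ IH mcoeffX.
case: (eqVneq m u) => [<-|mu].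
  by case: (Cdeg C m == 0%N); rewrite ?mcoeffX ?mcoeff0 ?eqxx ?mulr0 ?add0r.
case: (Cdeg C m == 0%N); rewrite ?mcoeffX ?mcoeff0 ?(negbTE mu) ?mulr0 ?add0r //.
Qed.

Lemma psi_root C p : phi C p = 0 -> exists q, psi C p = q * 'X.
Proof.
move=> h; have : root (psi C p) 0 by rewrite /root -/(phi C p) h.
by case/factor_theorem => q ->; exists q; rewrite subr0.
Qed.

Lemma psi_prod C (s : seq R) : (forall g, g \in s -> phi C g = 0) ->
  exists Q, psi C (\prod_(g <- s) g) = 'X ^+ (size s) * Q.
Proof.
elim: s => [|g s IH] h; first by exists 1; rewrite big_nil psi1 expr0 mulr1.
have [q hq] := psi_root (h g (mem_head g s)).
have [Q hQ] : exists Q, psi C (\prod_(g <- s) g) = 'X ^+ (size s) * Q by apply: IH => g' hg'; apply: h; rewrite inE hg' orbT.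
exists (q * Q); rewrite big_cons psiM hq hQ /= exprS; ring.
Qed.

Lemma val_pow C t h : ideal_pow (fun g => phi C g = 0) t h -> exists Q, psi C h = 'X ^+ t * Q.
Proof.
move=> [r [hr ->]]; elim: r hr => [|p r IH] hr.
  by exists 0; rewrite big_nil psi0 mulr0.
have [Q hQ] := IH (fun q hq => hr q (ltac:(by rewrite inE hq orbT))).
have [s [sz [hs e2]]] := hr p (mem_head p r).
have [Q' hQ'] := psi_prod hs.
exists (psi C p.1 * Q' + Q); rewrite big_cons psiD psiM e2 hQ' hQ sz; ring.
Qed.

Lemma mpolyX_neq0 (u : 'X_{1..N}) : 'X_[u] != 0 :> R.
Proof. by apply/eqP => /(congr1 (mcoeff u)); rewrite mcoeffX eqxx mcoeff0 => /eqP; rewrite oner_eq0. Qed.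

Lemma psiXn C f M : psi C (f ^+ M) = psi C f ^+ M.
Proof. by rewrite /psi rmorphXn. Qed.

Lemma stepB C t M f m : ideal_pow (fun g => phi C g = 0) t (f ^+ M * 'X_[m]) ->
  (Cdeg C m < t)%N -> phi C f = 0.
Proof.
move=> /val_pow [Q hQ] lt.
move: hQ; rewrite psiM psiXn psiX => hQ.
set c := Cdeg C m in hQ lt.
set Rr := psi C f ^+ M * ('X_[m])%:P.
have e : 'X ^+ c * Rr = 'X ^+ c * ('X ^+ (t - c) * Q).
  rewrite mulrA -exprD subnKC ?(ltnW lt) // -hQ /Rr; ring.
have nz : 'X ^+ c != 0 :> {poly R} by apply: expf_neq0; rewrite polyX_eq0.
have e2 := mulfI nz e.
have : Rr.[0] = 0 by rewrite e2 hornerM hornerXn expr0n subn_eq0 leqNgt lt /= mul0r.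
rewrite /Rr hornerM horner_exp hornerC -/(phi C f) => /eqP.
rewrite mulf_eq0 (negbTE (mpolyX_neq0 m)) orbF expf_eq0 => /andP [_ /eqP] //.
Qed.

Lemma ker_ideal C : is_ideal (fun g => phi C g = 0).
Proof.
split; first exact: phi0.
split; first by move=> f g hf hg; rewrite phiD hf hg addr0.
by move=> c f hf; rewrite phiM hf mulr0.
Qed.

Lemma ker_prime C : is_prime_ideal (fun g => phi C g = 0).
Proof.
split; first exact: ker_ideal.
split; first by rewrite phi1; apply/eqP; rewrite oner_eq0.
by move=> f g; rewrite phiM => /eqP; rewrite mulf_eq0 => /orP [] /eqP; [left|right].
Qed.

Lemma CdegU C i : Cdeg C U_(i) = (i \in C).
Proof.
rewrite /Cdeg (eq_bigr (fun j => nat_of_bool (i == j))); last by move=> j _; rewrite mnm1E.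
case: (boolP (i \in C)) => iC.
  rewrite (bigD1 i) //= eqxx big1 // => j /andP [_ ji]; by rewrite eq_sym (negbTE ji).
by rewrite big1 // => j jC; have -> : (i == j) = false by apply: contraNF iC => /eqP ->.
Qed.

Lemma phiXi C i : phi C 'X_i = if i \in C then 0 else 'X_i.
Proof. by rewrite phiX CdegU; case: (i \in C). Qed.

Variable adj : rel 'I_N.
Definition Iadj : R -> Prop := gen_ideal (fun f => exists i j, adj i j /\ f = 'X_i * 'X_j).

Lemma I_sub C : (forall i j, adj i j -> (i \in C) || (j \in C)) -> forall g, Iadj g -> phi C g = 0.
Proof.
move=> cov g; apply: (@gen_in _ _ (fun g => phi C g = 0)); first exact: ker_ideal.
move=> h [i [j [Aij ->]]]; rewrite phiM !phiXi.
by case/orP: (cov i j Aij) => ->; rewrite ?mul0r ?mulr0.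
Qed.

Definition asb (P : Prop) : bool := if excluded_middle_informative P then true else false.
Lemma asbP (P : Prop) : asb P <-> P.
Proof. by rewrite /asb; case: excluded_middle_informative. Qed.

Lemma ker_min C : (forall i j, adj i j -> (i \in C) || (j \in C)) ->
  (forall D : {set 'I_N}, (forall i j, adj i j -> (i \in D) || (j \in D)) -> D \subset C -> C \subset D) ->
  minimal_prime Iadj (fun g => phi C g = 0).
Proof.
move=> cov minC; split; first exact: ker_prime.
split; first exact: I_sub.
move=> Q [[Q0 [QD QM]] [Q1 Qp]] IQ QP.
pose D := [set i | asb (Q 'X_i)].
have covD : forall i j, adj i j -> (i \in D) || (j \in D).
  move=> i j Aij; rewrite !in_set.
  have : Q ('X_i * 'X_j) by apply: IQ; apply: genG; exists i, j.
  by case/Qp => /asbP ->; rewrite ?orbT.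
have DC : D \subset C.
  apply/subsetP => i; rewrite in_set => /asbP /QP; rewrite phiXi.
  by case: (i \in C) => // /eqP; rewrite (negbTE (mpolyX_neq0 _)).
have CD := minC D covD DC.
have QX : forall i, i \in C -> Q 'X_i by move=> i /(subsetP CD); rewrite in_set => /asbP.
move=> f hf; rewrite (mpolyE f) big_seq; apply: (big_ind Q) => //.
move=> u us.
have := phi_coef C f u; rewrite hf mcoeff0.
case: eqP => hc; first by move/eqP; rewrite eq_sym mcoeff_eq0 us.
move=> _.
have [i iC ui] : exists2 i, i \in C & (0 < u i)%N.
  apply/exists_inP; apply: contraR (introN eqP hc) => h.
  apply/eqP; apply: big1 => i iC; apply/eqP; rewrite -leqn0 leqNgt.
  by apply: contra h => ui; apply/exists_inP; exists i.
have le : (U_(i) <= u)%MM by apply/mnm_lepP => j; rewrite mnm1E; case: eqP => [<-|]; lia.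
rewrite -mul_mpolyC -(submK le) mpolyXD mulrA; apply: QM; exact: QX.
Qed.


Definition covR C := forall i j, adj i j -> (i \in C) || (j \in C).

Lemma exists_min_sub C : covR C -> exists2 C', covR C' /\ C' \subset C &
  (forall D, covR D -> D \subset C' -> C' \subset D).
Proof.
move=> cC.
case: (@arg_minnP _ C (fun D => coverb adj D && (D \subset C)) (fun D => #|D|)).
  by rewrite subxx andbT; apply/coverP.
move=> C' /andP [/coverP cC' sC'] minC'; exists C' => //.
move=> D cD sD; have := minC' D; rewrite (introT (coverP _ _) cD) (subset_trans sD sC') => /(_ isT) hc.
have /eqP -> : D == C' by rewrite eqEcard sD hc.
exact: subxx.
Qed.

Lemma Cdeg_pos C u : Cdeg C u != 0%N -> exists2 i, i \in C & (0 < u i)%N.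
Proof.
move=> h; apply/exists_inP; apply: contraR h => h'.
apply/eqP; apply: big1 => i iC; apply/eqP; rewrite -leqn0 leqNgt.
by apply: contra h' => ui; apply/exists_inP; exists i.
Qed.

Lemma Cdeg_sub C D u : C \subset D -> (Cdeg C u <= Cdeg D u)%N.
Proof. exact: (@wsum_sub _ (fun i => u i)). Qed.

Lemma claim1 t M f m : symb_pow Iadj t (f ^+ M * 'X_[m]) ->
  forall u, u \in msupp f -> forall C, covR C -> (Cdeg C m < t)%N -> exists2 i, i \in C & (0 < u i)%N.
Proof.
move=> H u us C cC lt.
have [C' [cC' sC'] minC'] := exists_min_sub cC.
have hP := H _ (ker_min cC' minC').
have lt' : (Cdeg C' m < t)%N by apply: leq_ltn_trans (Cdeg_sub m sC') lt.
have h0 := stepB hP lt'.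
have := phi_coef C' f u; rewrite h0 mcoeff0.
case: eqP => hc; first by move/eqP; rewrite eq_sym mcoeff_eq0 us.
move=> _; have [i iC' ui] := Cdeg_pos (introN eqP hc).
by exists i => //; apply: (subsetP sC').
Qed.

Lemma count_flat (s : seq 'I_N) (w : 'I_N -> nat) j :
  count_mem j (flatten [seq nseq (w i) i | i <- s]) = (count_mem j s * w j)%N.
Proof.
elim: s => [|i s IH] //=; rewrite count_cat count_nseq IH /=.
by case: (eqVneq i j) => [->|ij] /=; lia.
Qed.

Lemma mem_flat (s : seq 'I_N) (w : 'I_N -> nat) j :
  j \in flatten [seq nseq (w i) i | i <- s] -> j \in s.
Proof.
elim: s => [|i s IH] //=; rewrite mem_cat mem_nseq inE => /orP [/andP [_ ->] //|/IH ->]; by rewrite orbT.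
Qed.

Lemma size_flat (s : seq 'I_N) (w : 'I_N -> nat) :
  size (flatten [seq nseq (w i) i | i <- s]) = (\sum_(i <- s) w i)%N.
Proof. by elim: s => [|i s IH]; rewrite ?big_nil ?big_cons //= size_cat size_nseq IH. Qed.

Lemma sumU (S : seq 'I_N) j : ((\sum_(i <- S) U_(i)) j)%MM = count_mem j S.
Proof.
by elim: S => [|i S IH]; rewrite ?big_nil ?big_cons ?mnm0E //= mnmDE IH mnm1E.
Qed.

Lemma claim2 t m : ~ symb_pow Iadj t 'X_[m] -> exists2 C0, covR C0 & (Cdeg C0 m < t)%N.
Proof.
rewrite /symb_pow => H; have [P HP0] := not_all_ex_not _ _ H; have [HP nP] := imply_to_and _ _ HP0; case: HP => [[[P0 [PD PM]] [P1 Pp]] [IP _]].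
pose D := [set i | asb (P 'X_i)].
have covD : covR D.
  move=> i j Aij; rewrite !in_set.
  have : P ('X_i * 'X_j) by apply: IP; apply: genG; exists i, j.
  by case/Pp => /asbP ->; rewrite ?orbT.
exists D => //; rewrite ltnNge; apply/negP => le; apply: nP.
pose S := take t (flatten [seq nseq (m i) i | i <- enum D]).
apply: (@mono_pow _ _ [seq (U_(i))%MM | i <- S]).
- rewrite size_map size_takel // size_flat big_enum //.
- move=> u /mapP [i iS ->]; have := mem_flat (mem_take iS); rewrite mem_enum in_set => /asbP //.
- apply/mnm_lepP => j; rewrite big_map sumU.
  apply: (@leq_trans (count_mem j (flatten [seq nseq (m i) i | i <- enum D]))).
    by rewrite -[X in (_ <= count_mem _ X)%N](cat_take_drop t) count_cat leq_addr.
  rewrite count_flat; have := count_uniq_mem j (enum_uniq (mem D)).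
  by case: (j \in enum D) => -> /=; lia.
Qed.

Lemma edge_pow t (L : seq ('I_N * 'I_N)) (b : 'X_{1..N}) :
  size L = t -> all (fun p => adj p.1 p.2) L -> (forall j, (usage j L <= b j)%N) ->
  ideal_pow Iadj t 'X_[b].
Proof.
move=> sz hall hu.
apply: (@mono_pow _ _ [seq (U_(p.1) + U_(p.2))%MM | p <- L]).
- by rewrite size_map.
- move=> u /mapP [p pL ->]; rewrite mpolyXD; apply: genG; exists p.1, p.2; split => //.
  exact: (allP hall).
- apply/mnm_lepP => j; rewrite big_map; apply: leq_trans (hu j).
  elim: L {sz hall hu} => [|p L IH]; rewrite ?big_nil ?big_cons ?mnm0E // mnmDE mnmDE !mnm1E usage_cons.
  by rewrite leq_add2l.
Qed.

End M.

Import GRing.Theory.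
Local Open Scope ring_scope.

Theorem lemma4p2 (k : fieldType) (n a : nat) (t : nat) (m : expvec (2 * n)) :
  (1 <= a)%N -> (a < n)%N ->
  graph_connected (circ_adj n a) ->
  (1 <= t)%N ->
  ~ symb_pow (edge_ideal_circ k n a) t 'X_[m] ->
  forall f : {mpoly k[2 * n]},
    ideal_rad (ideal_colon (ideal_pow (edge_ideal_circ k n a) t) 'X_[m]) f <->
    ideal_rad (ideal_colon (symb_pow (edge_ideal_circ k n a) t) 'X_[m]) f.
Proof.
move=> a1 an conn t1 nS f.
change (edge_ideal_circ k n a) with (@Iadj k (2 * n) (circ_adj n a)) in nS |- *.
split.
  case=> M hM; exists M => P [_ [IP _]]; exact: ideal_pow_mono IP hM.
case=> M hM.
have [C0 cC0 lt0] := claim2 nS.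
rewrite (mpolyE f) big_seq; apply: big_ind.
- by exists 1%N; rewrite /ideal_colon expr1 mul0r; apply: gen0.
- by move=> x y; apply: RC_D.
move=> u us; rewrite -mul_mpolyC; apply: RC_M.
pose F := [set i | (0 < u i)%N].
have hC : forall C : {set 'I_(2 * n)}, (forall x y, circ_adj n a x y -> (x \in C) || (y \in C)) ->
    (wsum (fun i => m i) C < t)%N -> [exists x in F, x \in C].
  move=> C cC lt; have [i iC ui] := claim1 hM us cC lt.
  by apply/exists_inP; exists i => //; rewrite in_set.
have Fn : F != set0.
  have [i iC ui] := claim1 hM us cC0 lt0.
  by apply/set0Pn; exists i; rewrite in_set.
have [L [sz hall hu]] := circ_comb a1 an conn Fn hC.
exists t; rewrite /ideal_colon mpolyXn -mpolyXD.
apply: (@edge_pow k (2 * n) (circ_adj n a) t L (u *+ t + m)%MM sz hall) => j.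
apply: leq_trans (hu j) _; rewrite mnmDE mulmnE in_set.
by case: (ltnP 0 (u j)) => h /=; nia.
Qed.
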